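(* Let $\boldsymbol{A},\boldsymbol{B}\in\mathsf{ISL}$ and let $\mathbb{X},\mathbb{Y}$ be posets. (i) If $f\colon\boldsymbol{A}\to\boldsymbol{B}$ is a homomorphism, then $f_\ast\colon\boldsymbol{B}_\ast\rightharpoonup\boldsymbol{A}_\ast$ is a partial positive p-morphism. (ii) If $p\colon\mathbb{X}\rightharpoonup\mathbb{Y}$ is a partial positive p-morphism, then $\mathsf{Up}_{\mathsf{ISL}}(p)\colon\mathsf{Up}_{\mathsf{ISL}}(\mathbb{Y})\to\mathsf{Up}_{\mathsf{ISL}}(\mathbb{X})$ is a homomorphism.
   Context: $\mathsf{ISL}$ is the class of implicative semilattices $\langle A;\land,\to,1\rangle$: $\langle A;\land\rangle$ is a semilattice (order $a\le b$ iff $a\land b=a$) with maximum $1$ and $c\land a\le b\iff c\le a\to b$ for all $a,b,c$. A filter is a nonempty upset closed under $\land$; it is meet irreducible if proper and not the intersection of two filters both different from it; $\boldsymbol{A}_\ast$ is the poset of meet irreducible filters under inclusion. A partial function $p\colon X\rightharpoonup Y$ is a function from $\mathsf{dom}(p)\subseteq X$ to $Y$; between posets it is order preserving if $x\le z$ in $\mathsf{dom}(p)$ implies $p(x)\le p(z)$. An order preserving $p\colon\mathbb{X}\rightharpoonup\mathbb{Y}$ is a partial positive p-morphism if whenever $x\in\mathsf{dom}(p)$, $y\in Y$, $p(x)\le y$, there is $z\in\mathsf{dom}(p)$ with $x\le z$ and $y=p(z)$. For a homomorphism $f$, $f_\ast$ has domain $\{F\in\boldsymbol{B}_\ast: f^{-1}[F]\in\boldsymbol{A}_\ast\}$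 and $f_\ast(F)=f^{-1}[F]$. For a poset $\mathbb{X}$, $\mathsf{Up}_{\mathsf{ISL}}(\mathbb{X})=\langle\mathsf{Up}(\mathbb{X});\cap,\to,X\rangle$ with $\mathsf{Up}(\mathbb{X})$ the set of upsets and $U\to V=X\smallsetminus{\downarrow}(U\smallsetminus V)$; and $\mathsf{Up}_{\mathsf{ISL}}(p)(U)=X\smallsetminus{\downarrow}p^{-1}[Y\smallsetminus U]$. *)

(* Defs.v *)
From Stdlib Require Import ClassicalEpsilon.


Record ISLsig := {
  car :> Type;
  meet : car -> car -> car;
  imp : car -> car -> car;
  top : car
}.

Definition isl_le (A : ISLsig) (a b : A) : Prop := meet A a b = a.

Definition is_ISL (A : ISLsig) : Prop :=
  (forall a b c : A, meet A a (meet A b c) = meet A (meet A a b) c) /\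
  (forall a b : A, meet A a b = meet A b a) /\
  (forall a : A, meet A a a = a) /\
  (forall a : A, isl_le A a (top A)) /\
  (forall a b c : A, isl_le A (meet A c a) b <-> isl_le A c (imp A a b)).

Definition is_hom (A B : ISLsig) (f : A -> B) : Prop :=
  (forall a b : A, f (meet A a b) = meet B (f a) (f b)) /\
  (forall a b : A, f (imp A a b) = imp B (f a) (f b)) /\
  f (top A) = top B.

Definition is_filter (A : ISLsig) (F : A -> Prop) : Prop :=
  (exists a, F a) /\
  (forall a b : A, F a -> isl_le A a b -> F b) /\
  (forall a b : A, F a -> F b -> F (meet A a b)).

Definition same_set (T : Type) (F G : T -> Prop) : Prop := forall x, F x <-> G x.

Definition meet_irreducible (A : ISLsig) (F : A -> Prop) : Prop :=
  is_filter A F /\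
  (exists a, ~ F a) /\
  ~ (exists G H : A -> Prop,
        is_filter A G /\ is_filter A H /\ ~ same_set _ G F /\ ~ same_set _ H F /\
        same_set _ F (fun a => G a /\ H a)).

Definition MIF (A : ISLsig) : Type := { F : A -> Prop | meet_irreducible A F }.

Definition MIF_le (A : ISLsig) (F G : MIF A) : Prop :=
  forall a, proj1_sig F a -> proj1_sig G a.

Definition f_star (A B : ISLsig) (f : A -> B) (F : MIF B) : option (MIF A) :=
  match excluded_middle_informative
          (meet_irreducible A (fun a => proj1_sig F (f a))) with
  | left H => Some (exist _ (fun a => proj1_sig F (f a)) H)
  | right _ => None
  end.

Record Poset := {
  pcar :> Type;
  ple : pcar -> pcar -> Prop;
  ple_refl : forall x, ple x x;
  ple_antisym : forall x y, ple x y -> ple y x -> x = y;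
  ple_trans : forall x y z, ple x y -> ple y z -> ple x z
}.

(* a partial function p : X -/-> Y is a function X -> option Y;
   dom(p) = {x | p x <> None} *)
Definition partial_order_preserving (X Y : Type) (leX : X -> X -> Prop)
  (leY : Y -> Y -> Prop) (p : X -> option Y) : Prop :=
  forall x z x' z', p x = Some x' -> p z = Some z' -> leX x z -> leY x' z'.

Definition partial_positive_pmorphism (X Y : Type) (leX : X -> X -> Prop)
  (leY : Y -> Y -> Prop) (p : X -> option Y) : Prop :=
  partial_order_preserving X Y leX leY p /\
  (forall x x' y, p x = Some x' -> leY x' y ->
     exists z, leX x z /\ p z = Some y).

Definition is_upset (X : Poset) (U : X -> Prop) : Prop :=
  forall x y, U x -> ple X x y -> U y.

Definition UpT (X : Poset) : Type := { U : X -> Prop | is_upset X U }.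

Definition compl_down (X : Poset) (S : X -> Prop) : X -> Prop :=
  fun x => ~ exists y, ple X x y /\ S y.

Lemma compl_down_upset (X : Poset) (S : X -> Prop) : is_upset X (compl_down X S).
Proof.
  intros x y Hx Hxy [z [Hyz Hz]]. apply Hx. exists z. split; [|exact Hz].
  exact (ple_trans X _ _ _ Hxy Hyz).
Qed.

Lemma cap_upset (X : Poset) (U V : UpT X) :
  is_upset X (fun x => proj1_sig U x /\ proj1_sig V x).
Proof.
  intros x y [Hu Hv] Hxy. split.
  - exact (proj2_sig U x y Hu Hxy).
  - exact (proj2_sig V x y Hv Hxy).
Qed.

Lemma full_upset (X : Poset) : is_upset X (fun _ : X => True).
Proof. intros x y _ _; exact I. Qed.

Definition Up_meet (X : Poset) (U V : UpT X) : UpT X :=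
  exist _ (fun x => proj1_sig U x /\ proj1_sig V x) (cap_upset X U V).

Definition Up_imp (X : Poset) (U V : UpT X) : UpT X :=
  exist _ (compl_down X (fun x => proj1_sig U x /\ ~ proj1_sig V x))
        (compl_down_upset _ _).

Definition Up_top (X : Poset) : UpT X := exist _ (fun _ => True) (full_upset X).

Definition Up_ISL (X : Poset) : ISLsig :=
  {| car := UpT X; meet := Up_meet X; imp := Up_imp X; top := Up_top X |}.

Definition Up_ISL_map (X Y : Poset) (p : X -> option Y) (U : UpT Y) : UpT X :=
  exist _ (compl_down X (fun x => exists y, p x = Some y /\ ~ proj1_sig U y))
        (compl_down_upset _ _).

(* Main.v *)
Require Import Defs.
From Stdlib Require Import Classical ClassicalEpsilon FunctionalExtensionality PropExtensionality ProofIrrelevance.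
From mathcomp Require classical_sets.

Section ISLfacts.
Lemma le_refl (A : ISLsig) (HA : is_ISL A) a : isl_le A a a.
Proof. destruct HA as [Hass [Hcom [Hid [Htop Hres]]]]. apply Hid. Qed.

Lemma le_trans' (A : ISLsig) (HA : is_ISL A) a b c :
  isl_le A a b -> isl_le A b c -> isl_le A a c.
Proof.
  destruct HA as [Hass [Hcom [Hid [Htop Hres]]]]. unfold isl_le. intros H1 H2.
  transitivity (meet A (meet A a b) c). rewrite H1; reflexivity.
  rewrite <- Hass, H2, H1. reflexivity.
Qed.

Lemma meet_l (A : ISLsig) (HA : is_ISL A) a b : isl_le A (meet A a b) a.
Proof.
  destruct HA as [Hass [Hcom [Hid [Htop Hres]]]]. unfold isl_le.
  rewrite (Hcom (meet A a b) a), Hass, Hid. reflexivity.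
Qed.

Lemma meet_r (A : ISLsig) (HA : is_ISL A) a b : isl_le A (meet A a b) b.
Proof.
  destruct HA as [Hass [Hcom [Hid [Htop Hres]]]]. unfold isl_le.
  rewrite <- Hass, Hid. reflexivity.
Qed.

Lemma meet_glb (A : ISLsig) (HA : is_ISL A) a b c :
  isl_le A c a -> isl_le A c b -> isl_le A c (meet A a b).
Proof.
  destruct HA as [Hass [Hcom [Hid [Htop Hres]]]]. unfold isl_le. intros H1 H2.
  rewrite Hass, H1, H2. reflexivity.
Qed.

Lemma le_top (A : ISLsig) (HA : is_ISL A) a : isl_le A a (top A).
Proof. destruct HA as [Hass [Hcom [Hid [Htop Hres]]]]. apply Htop. Qed.

Lemma resid (A : ISLsig) (HA : is_ISL A) a b c :
  isl_le A (meet A c a) b <-> isl_le A c (imp A a b).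
Proof. destruct HA as [Hass [Hcom [Hid [Htop Hres]]]]. apply Hres. Qed.

Lemma ev (A : ISLsig) (HA : is_ISL A) a b : isl_le A (meet A (imp A a b) a) b.
Proof. apply (proj2 (resid A HA _ _ _)). apply le_refl; auto. Qed.

Lemma mp (A : ISLsig) (HA : is_ISL A) a b : isl_le A (meet A a (imp A a b)) b.
Proof.
  pose proof HA as HA'. destruct HA' as [Hass [Hcom [Hid [Htop Hres]]]].
  rewrite Hcom. apply ev; auto.
Qed.

Lemma meet_mono_r (A : ISLsig) (HA : is_ISL A) x y z :
  isl_le A x y -> isl_le A (meet A z x) (meet A z y).
Proof.
  intro H. apply meet_glb; auto. apply meet_l; auto.
  eapply le_trans'; eauto. apply meet_r; auto.
Qed.

Lemma meet_mono_l (A : ISLsig) (HA : is_ISL A) x y z :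
  isl_le A x y -> isl_le A (meet A x z) (meet A y z).
Proof.
  intro H. apply meet_glb; auto. eapply le_trans'; eauto. apply meet_l; auto.
  apply meet_r; auto.
Qed.

Lemma imp_ge (A : ISLsig) (HA : is_ISL A) a b : isl_le A b (imp A a b).
Proof. apply (proj1 (resid A HA _ _ _)). apply meet_l; auto. Qed.

Lemma imp_mono2 (A : ISLsig) (HA : is_ISL A) a b b' :
  isl_le A b b' -> isl_le A (imp A a b) (imp A a b').
Proof. intro H. apply (proj1 (resid A HA _ _ _)). eapply le_trans'; eauto. apply ev; auto. Qed.

Lemma imp_anti1 (A : ISLsig) (HA : is_ISL A) a a' b :
  isl_le A a' a -> isl_le A (imp A a b) (imp A a' b).
Proof.
  intro H. apply (proj1 (resid A HA _ _ _)). eapply le_trans'; auto.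
  apply meet_mono_r; eauto. apply ev; auto.
Qed.

Lemma imp_meet (A : ISLsig) (HA : is_ISL A) a x y :
  isl_le A (meet A (imp A a x) (imp A a y)) (imp A a (meet A x y)).
Proof.
  apply (proj1 (resid A HA _ _ _)). apply meet_glb; auto.
  eapply le_trans'; auto. apply meet_mono_l; auto. apply meet_l; auto. apply ev; auto.
  eapply le_trans'; auto. apply meet_mono_l; auto. apply meet_r; auto. apply ev; auto.
Qed.

Lemma top_le_imp (A : ISLsig) (HA : is_ISL A) a : isl_le A (top A) (imp A a a).
Proof. apply (proj1 (resid A HA _ _ _)). apply meet_r; auto. Qed.

Lemma filter_top (A : ISLsig) (HA : is_ISL A) F : is_filter A F -> F (top A).
Proof.
  intros [[a Fa] [Hup _]]. apply (Hup a); auto. apply le_top; auto.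
Qed.

Lemma filter_mp (A : ISLsig) (HA : is_ISL A) F a b :
  is_filter A F -> F a -> F (imp A a b) -> F b.
Proof.
  intros [_ [Hup Hm]] Fa Fab. apply (Hup (meet A a (imp A a b))); auto.
  apply mp; auto.
Qed.

Lemma hom_mono (A B : ISLsig) (f : A -> B) :
  is_hom A B f -> forall a b, isl_le A a b -> isl_le B (f a) (f b).
Proof.
  intros [Hm _] a b H. unfold isl_le in *. rewrite <- Hm, H. reflexivity.
Qed.

Lemma prime_MI (A : ISLsig) (HA : is_ISL A) (H : A -> Prop) :
  meet_irreducible A H -> forall a1 a2, ~ H a1 -> ~ H a2 ->
  exists c, ~ H c /\ isl_le A a1 c /\ isl_le A a2 c.
Proof.
  intros [Hf [_ Hirr]] a1 a2 N1 N2.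
  apply NNPP; intro Hno. apply Hirr.
  pose proof Hf as Hf'. destruct Hf' as [_ [Hup Hmeet]].
  assert (Gf : forall a, is_filter A (fun x => H (imp A a x))).
  { intro a. split; [|split].
    - exists (top A). apply (Hup (top A)). apply (filter_top A HA H Hf).
      apply (proj1 (resid A HA _ _ _)). apply le_top; auto.
    - intros x y Hx Hxy. eapply Hup; eauto. apply imp_mono2; auto.
    - intros x y Hx Hy. eapply Hup. apply (Hmeet _ _ Hx Hy). apply imp_meet; auto. }
  assert (Gn : forall a, ~ H a -> ~ same_set _ (fun x => H (imp A a x)) H).
  { intros a Na S. apply Na. apply S. apply (Hup (top A)). apply (filter_top A HA H Hf).
    apply top_le_imp; auto. }
  exists (fun x => H (imp A a1 x)), (fun x => H (imp A a2 x)).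
  split; [auto|split; [auto|split; [auto|split; [auto|]]]].
  intro x. split.
  - intro Hx. split; eapply Hup; eauto; apply imp_ge; auto.
  - intros [G1 G2]. apply NNPP; intro Nx. apply Hno.
    set (P := imp A a1 x). set (Q := imp A a2 x).
    exists (imp A (meet A P Q) x). split; [|split].
    + intro Hc. apply Nx. apply (filter_mp A HA H (meet A P Q) x Hf (Hmeet _ _ G1 G2) Hc).
    + apply (proj1 (resid A HA _ _ _)). eapply le_trans'; auto. apply meet_mono_r; auto.
      apply meet_l; auto. apply mp; auto.
    + apply (proj1 (resid A HA _ _ _)). eapply le_trans'; auto. apply meet_mono_r; auto.
      apply meet_r; auto. apply mp; auto.
Qed.
End ISLfacts.

Lemma mif_eq (A : ISLsig) (P : A -> Prop) (hp : meet_irreducible A P) (h : MIF A) :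
  P = proj1_sig h -> exist _ P hp = h.
Proof.
  destruct h as [Q hq]; simpl. intro E. subst. f_equal. apply proof_irrelevance.
Qed.

Lemma up_eq (X : Poset) (U V : UpT X) :
  (forall x, proj1_sig U x <-> proj1_sig V x) -> U = V.
Proof.
  destruct U as [U hU], V as [V hV]; simpl. intro E.
  assert (U = V) by (apply functional_extensionality; intro x;
    apply propositional_extensionality; auto).
  subst. f_equal. apply proof_irrelevance.
Qed.

Lemma part1 (A B : ISLsig) : is_ISL A -> is_ISL B ->
     forall f : A -> B, is_hom A B f ->
       partial_positive_pmorphism (MIF B) (MIF A) (MIF_le B) (MIF_le A)
         (f_star A B f).
Proof.
  intros HA HB f Hf. split.
  - intros F1 F2 G1 G2 E1 E2 Hle. unfold f_star in E1, E2.
    destruct (excluded_middle_informative _) in E1; [|discriminate].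
    destruct (excluded_middle_informative _) in E2; [|discriminate].
    injection E1; injection E2; intros; subst. intro a; simpl. apply Hle.
  - intros F G H E Hle. unfold f_star in E.
    destruct (excluded_middle_informative _) in E; [|discriminate].
    injection E; intro; subst G. clear E.
    assert (Hle' : forall a, proj1_sig F (f a) -> proj1_sig H a) by exact Hle.
    clear Hle.
    destruct H as [Hs HMI]. simpl in Hle'.
    destruct F as [Fs FMI]. simpl in Hle'.
    pose proof HMI as HMI'. destruct HMI' as [HsF [[a0 Na0] _]].
    pose proof FMI as FMI'. destruct FMI' as [FsF _].
    pose proof HsF as HsF'. destruct HsF' as [[h0 Hh0] [Hsup Hsmeet]].
    pose proof FsF as FsF'. destruct FsF' as [_ [Fsup Fsmeet]].
    pose proof Hf as Hf'. destruct Hf' as [Hfm [Hfi Hft]].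
    set (P := fun M : B -> Prop => is_filter B M /\ (forall b, Fs b -> M b) /\
               (forall a, Hs a -> M (f a)) /\ (forall a, M (f a) -> Hs a)).
    set (P' := fun M : B -> Prop => (forall b, ~ M b) \/ P M).
    set (F' := fun b => exists h, Hs h /\ Fs (imp B (f h) b)).
    assert (PF' : P F').
    { split; [split; [|split]|split; [|split]].
      - exists (f h0). exists h0. split; auto. apply (Fsup (top B)).
        apply (filter_top B HB Fs FsF). apply top_le_imp; auto.
      - intros x y [h [Hh Fh]] Hxy. exists h. split; auto. eapply Fsup; eauto.
        apply imp_mono2; auto.
      - intros x y [h1 [Hh1 Fh1]] [h2 [Hh2 Fh2]]. exists (meet A h1 h2).
        split; auto.
        apply (Fsup (meet B (imp B (f (meet A h1 h2)) x) (imp B (f (meet A h1 h2)) y))).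
        apply Fsmeet.
        + apply (Fsup _ _ Fh1). apply imp_anti1; auto. rewrite Hfm. apply meet_l; auto.
        + apply (Fsup _ _ Fh2). apply imp_anti1; auto. rewrite Hfm. apply meet_r; auto.
        + apply imp_meet; auto.
      - intros b Fb. exists h0. split; auto. eapply Fsup; eauto. apply imp_ge; auto.
      - intros a Ha. exists a. split; auto. apply (Fsup (top B)).
        apply (filter_top B HB Fs FsF). apply top_le_imp; auto.
      - intros a [h [Hh Fh]]. rewrite <- Hfi in Fh. apply Hle' in Fh.
        apply (filter_mp A HA Hs h a HsF Hh Fh). }
    destruct (@classical_sets.Zorn_bigcup B P') as [M [PM Mmax]].
    { intros Fam Hsub Htot.
      destruct (classic (exists X, Fam X /\ P X)) as [[X0 [FX0 PX0]]|Hno].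
      - right.
        assert (memP : forall X b, Fam X -> X b -> P X).
        { intros X b FX Xb. destruct (Hsub X FX) as [E|E]; [exfalso; eapply E; eauto|auto]. }
        destruct PX0 as [[[b0 Xb0] _] [PX0F [PX0H _]]].
        split; [split; [|split]|split; [|split]].
        + exists b0. exists X0; auto.
        + intros x y [X FX Xx] Hxy. exists X; auto.
          destruct (memP X x FX Xx) as [[_ [Hup _]] _]. eapply Hup; eauto.
        + intros x y [X1 FX1 Xx] [X2 FX2 Xy].
          destruct (Htot X1 X2 FX1 FX2) as [S|S].
          * exists X2; auto. destruct (memP X2 y FX2 Xy) as [[_ [_ Hm]] _]. apply Hm; auto.
          * exists X1; auto. destruct (memP X1 x FX1 Xx) as [[_ [_ Hm]] _]. apply Hm; auto.
        + intros b Fb. exists X0; auto.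
        + intros a Ha. exists X0; auto.
        + intros a [X FX Xa]. destruct (memP X _ FX Xa) as [_ [_ [_ Hp]]]. auto.
      - left. intros b [X FX Xb]. destruct (Hsub X FX) as [E|E].
        + eapply E; eauto.
        + apply Hno. exists X; auto. }
    destruct PM as [Mempty|PM].
    { exfalso. apply (Mmax F'). split.
      - intros b Mb. exfalso. eapply Mempty; eauto.
      - intro S. eapply (Mempty (f h0)). apply S. destruct PF' as [_ [_ [Hq _]]]. auto.
      - right; auto. }
    destruct PM as [Mf [MF [MH MHi]]].
    assert (Eq : (fun a => M (f a)) = Hs).
    { apply functional_extensionality; intro a. apply propositional_extensionality.
      split; auto. }
      assert (MIM : meet_irreducible B M).
      { split; [auto|split].
        - exists (f a0). intro Ma. apply Na0. auto.
        - intros [G1 [G2 [HG1 [HG2 [N1 [N2 Heq]]]]]].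
          assert (Ex : forall G, is_filter B G -> ~ same_set _ G M ->
                         (forall b, M b -> G b) ->
                         exists a, ~ Hs a /\ G (f a)).
          { intros G HG NG Sub. apply NNPP; intro Hno. apply (Mmax G).
            - split; auto. intro S. apply NG. intro x; split; auto.
            - right. split; [auto|split; [|split]].
              + intros b Fb. auto.
              + intros a Ha. auto.
              + intros a Ga. apply NNPP; intro Na. apply Hno. exists a; auto. }
          destruct (Ex G1 HG1 N1) as [a1 [Na1 G1a1]].
          { intros b Mb. apply Heq in Mb. tauto. }
          destruct (Ex G2 HG2 N2) as [a2 [Na2 G2a2]].
          { intros b Mb. apply Heq in Mb. tauto. }
          destruct (prime_MI A HA Hs HMI a1 a2 Na1 Na2) as [c [Nc [L1 L2]]].
          apply Nc. apply MHi. apply Heq. split.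
          + destruct HG1 as [_ [Hup _]]. eapply Hup; eauto. apply hom_mono; auto.
          + destruct HG2 as [_ [Hup _]]. eapply Hup; eauto. apply hom_mono; auto. }
      exists (exist _ M MIM). split.
    + intro b. simpl. auto.
    + unfold f_star. simpl.
      destruct (excluded_middle_informative _) as [Hm|Hn].
      * f_equal. apply mif_eq. simpl. exact Eq.
      * exfalso. apply Hn. rewrite Eq. exact HMI.
Qed.

Lemma part2 (X Y : Poset) (p : X -> option Y) :
     partial_positive_pmorphism X Y (ple X) (ple Y) p ->
     is_hom (Up_ISL Y) (Up_ISL X) (Up_ISL_map X Y p).
Proof.
  intros [Hop Hpos]. split; [|split].
  - intros U V. apply up_eq. intro x. simpl. unfold compl_down. split.
    + intro H. split; intros [z [Hz [y [Ey Ny]]]]; apply H; exists z; split; auto;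
        exists y; split; auto; tauto.
    + intros [H1 H2] [z [Hz [y [Ey Ny]]]].
      destruct (classic (proj1_sig U y)) as [Uy|Uy];
        first [ apply H2; exists z; split; [auto|]; exists y; split; [auto|]; tauto
              | apply H1; exists z; split; [auto|]; exists y; split; [auto|]; tauto ].
  - intros U V. apply up_eq. intro x. simpl. unfold compl_down. split.
    + intros H [z [Hxz [HUz HVz]]].
      apply NNPP in HVz. destruct HVz as [z' [Hzz' [y [Ey Ny]]]].
      apply H. exists z'. split. eapply ple_trans; eauto.
      exists y. split; auto. intro C. apply C. exists y. split. apply ple_refl.
      split; auto. apply NNPP. intro NUy. apply HUz. exists z'. split; auto.
      exists y; auto.
    + intros H [z [Hxz [y [Ey Ny]]]]. apply NNPP in Ny.
      destruct Ny as [w [Hyw [Uw Vw]]].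
      destruct (Hpos z y w Ey Hyw) as [z' [Hzz' Ez']].
      apply H. exists z'. split. eapply ple_trans; eauto. split.
      * intros [z'' [Hz'z'' [v [Ev Nv]]]]. apply Nv.
        apply (proj2_sig U w); auto. eapply Hop; eauto.
      * intro C. apply C. exists z'. split. apply ple_refl. exists w. auto.
  - apply up_eq. intro x. simpl. unfold compl_down. split; [auto|].
    intros _ [z [_ [y [_ N]]]]. apply N. exact I.
Qed.

Theorem proposition3p11 :
  (forall (A B : ISLsig), is_ISL A -> is_ISL B ->
     forall f : A -> B, is_hom A B f ->
       partial_positive_pmorphism (MIF B) (MIF A) (MIF_le B) (MIF_le A)
         (f_star A B f)) /\
  (forall (X Y : Poset) (p : X -> option Y),
     partial_positive_pmorphism X Y (ple X) (ple Y) p ->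
     is_hom (Up_ISL Y) (Up_ISL X) (Up_ISL_map X Y p)).
Proof.
  split. exact part1. exact part2.
Qed.
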